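(* Let $U_1,U_2,\dots$ be i.i.d. almost surely positive random variables distributed as $U$ with tail function $Q(x)=\mathbb{P}(U>x)$, and assume $\mathbb{E}[U^2]<\infty$ and that there exist $\beta\in(0,1/2)$ and $x_0>0$ in the interior of the support of $U$ such that $Q^{1/2-\beta}$ is convex on $[x_0,\infty)$. Let $V_1\le\dots\le V_N$ be the order statistics of $(U_1,\dots,U_N)$; conditionally on them let $(X_{i,j})_{1\le i<j\le N}$ be independent Bernoulli with $\mathbb{P}_V(X_{i,j}=1)=\frac{V_i}{V_i+V_j}$, $X_{j,i}=1-X_{i,j}$, $S_i=\sum_{j\ne i}X_{i,j}$ and $Z_N=\max_{1\le i\le N-1}S_i$. Let $\eta$ be a non-increasing deterministic function on $\mathbb{R}_+$ with $\lim_{+\infty}\eta=0$ such that $\mathbb{P}(B_N)\to1$, where $B_N=\{V_N/\sqrt N\le\eta(N)\}$, and let $C_N=\{\frac14\mathbb{E}[U]\le E_N(V)\le 2\mathbb{E}[U]\}$ with $E_N(V)=\frac1N\sum_{i=1}^{N-1}\frac{V_iV_{N-1}}{V_{N-1}+V_i}$. Then for $N$ large enough, on $B_N\cap C_N$, \[\mathbb{E}_V[Z_N]\le \sum_{i=1}^{N-1}\frac{V_{N-1}}{V_{N-1}+V_i}+\sqrt{8\,\mathbb{E}[U]\frac{N\log N}{V_{N-1}}}.\]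
   Context: $\mathbb{P}_V$ and $\mathbb{E}_V$ denote probability and expectation conditionally on $(V_1,\dots,V_N)$. *)

(* Defs.v *)
From HB Require Import structures.
From mathcomp Require Import all_boot all_order all_algebra.
From mathcomp Require Import all_classical all_reals all_analysis.
Set Implicit Arguments. Unset Strict Implicit. Unset Printing Implicit Defensive.
Import Order.TTheory GRing.Theory Num.Theory.
Import numFieldNormedType.Exports.
Local Open Scope classical_set_scope.
Local Open Scope ring_scope.

Section defs.
Context {d : measure_display} {T : measurableType d} {R : realType}.
Variable P : probability T R.

Definition mutually_independent (X : nat -> T -> R) : Prop :=
  forall (s : seq nat), uniq s ->
  forall (A : nat -> set R), (forall i, measurable (A i)) ->
  P (\bigcap_(i in [set` s]) (X i @^-1` A i)) =
  (\prod_(i <- s) P (X i @^-1` A i))%E.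

Definition identically_distributed (X : nat -> T -> R) : Prop :=
  forall n (A : set R), measurable A -> P (X n @^-1` A) = P (X 0%N @^-1` A).

Definition tail (U : T -> R) (x : R) : R := fine (P [set w | x < U w]).

Definition support (U : T -> R) : set R :=
  [set x | forall e : R, 0 < e -> (0%E < P [set w | (`|U w - x| < e)%R])%E].

Definition in_interior_support (U : T -> R) (x : R) : Prop :=
  exists2 e : R, 0 < e & forall y, `|y - x| < e -> support U y.
End defs.

Definition convex_on_halfline {R : realType} (f : R -> R) (a : R) : Prop :=
  forall x y t, a <= x -> a <= y -> 0 <= t <= 1 ->
    f (t * x + (1 - t) * y) <= t * f x + (1 - t) * f y.

(* k-th smallest (0-indexed) among u 0, ..., u (N-1): V_{k+1} in the paper. *)
Definition ordstat {R : realType} (N : nat) (u : nat -> R) (k : nat) : R :=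
  nth 0 (sort <=%R [seq u i | i <- iota 0 N]) k.

Section tournament.
Context {R : realType} (N : nat).
(* v : 'I_N -> R, v i = V_{i+1}. An outcome x records X_{i,j} for i < j
   (entries with ~~ (i < j) are required to be false). *)
Definition outcome_ok (x : {ffun 'I_N * 'I_N -> bool}) : bool :=
  [forall p : 'I_N * 'I_N, ~~ (p.1 < p.2)%N ==> ~~ x p].

Definition Xval (x : {ffun 'I_N * 'I_N -> bool}) (i j : 'I_N) : bool :=
  if (i < j)%N then x (i, j) else if (j < i)%N then ~~ x (j, i) else false.

Definition score (x : {ffun 'I_N * 'I_N -> bool}) (i : 'I_N) : R :=
  \sum_(j : 'I_N | j != i) (Xval x i j)%:R.

Definition Zmax (x : {ffun 'I_N * 'I_N -> bool}) : R :=
  \big[Num.max/0]_(i : 'I_N | (i < N.-1)%N) score x i.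

(* conditional probability of outcome x given V = v:
   independent Bernoulli with P(X_{i,j} = 1) = v_i / (v_i + v_j), i < j *)
Definition outcome_weight (v : 'I_N -> R) (x : {ffun 'I_N * 'I_N -> bool}) : R :=
  \prod_(p : 'I_N * 'I_N | (p.1 < p.2)%N)
    (if x p then v p.1 / (v p.1 + v p.2) else 1 - v p.1 / (v p.1 + v p.2)).

Definition cond_exp_Z (v : 'I_N -> R) : R :=
  \sum_(x : {ffun 'I_N * 'I_N -> bool} | outcome_ok x) outcome_weight v x * Zmax x.
End tournament.

(* Main.v *)
Require Import Defs.
From HB Require Import structures.
From mathcomp Require Import all_boot all_order all_algebra.
From mathcomp Require Import all_classical all_reals all_analysis.
From mathcomp Require Import ring lra zify.
Import Order.TTheory GRing.Theory Num.Theory.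
Import numFieldNormedType.Exports.
Local Open Scope classical_set_scope.
Local Open Scope ring_scope.
Set Implicit Arguments. Unset Strict Implicit. Unset Printing Implicit Defensive.

Section expb.
Context {R : realType}.

Lemma expR_inv_le (u : R) : u < 1 -> (1 - u) * expR u <= 1.
Proof.
move=> u1; have h := expR_ge1Dx (- u).
have e : expR (- u) * expR u = 1 by rewrite -expRD addNr expR0.
have p := expR_gt0 u.
have h' : 0 <= expR (- u) - (1 - u) by rewrite subr_ge0.
have := mulr_ge0 (ltW p) h'; nra.
Qed.

Lemma exp_quad (u : R) : `|u| <= 1/4 -> expR u <= 1 + u + u ^+ 2.
Proof.
move=> hu; have [u0|u0] := leP u 0.
  have hn2 : -u <= `|u| by rewrite -normrN ler_norm.
  have hu' : - u <= 1/4 by lra.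
  have := expR_gt0 u; have h1 := @expR_inv_le u; nra.
have e : expR u = expR (u/2) ^+ 2 by rewrite expr2 -expRD; congr expR; lra.
have hu' : u <= 1/4 by rewrite -(gtr0_norm u0).
have h := @expR_inv_le (u/2) ltac:(lra).
have p := expR_gt0 (u/2).
rewrite e; set b := expR (u/2) in h p *.
have hb : b <= (1 - u/2)^-1.
  by rewrite -(ler_pM2l (_ : 0 < 1 - u/2)) ?mulfV //; lra.
have : b ^+ 2 <= ((1 - u/2)^-1) ^+ 2 by rewrite lerXn2r // ?nnegrE ltW // invr_gt0; lra.
move/le_trans; apply.
set c := 1 - u/2.
have c0 : 0 < c by rewrite /c; lra.
set y := c^-1.
have yc : y * c = 1 by rewrite mulVf // gt_eqF.
have y0 : 0 < y by rewrite invr_gt0.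
have key : 1 <= (1 + u + u^+2) * c^+2 by rewrite /c; nra.
have := mulr_ge0 (ltW y0) (ltW y0); have := key.
have : y^+2 * c^+2 = 1 by rewrite -exprMn yc expr1n.
nra.
Qed.

Lemma bern (r l : R) : 0 <= r <= 1 -> 0 <= l <= 1/4 ->
  r * expR l + (1 - r) <= expR (l * r + l ^+ 2 * (r * (1 - r))).
Proof.
move=> /andP[r0 r1] /andP[l0 l1].
have e1 : expR (l * (1 - r)) <= 1 + l * (1 - r) + (l * (1 - r)) ^+ 2.
  apply: exp_quad; rewrite ger0_norm; nra.
have e2 : expR (- (l * r)) <= 1 + - (l * r) + (- (l * r)) ^+ 2.
  apply: exp_quad; rewrite normrN ger0_norm; nra.
have s : r * expR (l * (1 - r)) + (1 - r) * expR (- (l * r)) <= 1 + l ^+ 2 * (r * (1 - r)).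
  have := ler_wpM2l r0 e1; have := ler_wpM2l (_ : 0 <= 1 - r) e2.
  move=> /(_ ltac:(lra)) h2 h1; nra.
have q := expR_ge1Dx (l ^+ 2 * (r * (1 - r))).
rewrite expRD.
have -> : r * expR l + (1 - r) =
   expR (l * r) * (r * expR (l * (1 - r)) + (1 - r) * expR (- (l * r))).
  rewrite mulrDr !mulrA [expR _ * r]mulrC -!mulrA -!expRD.
  have -> : l * r + l * (1 - r) = l by ring.
  by rewrite mulrCA -expRD addrN expR0 mulr1.
apply: ler_wpM2l; [exact: expR_ge0 | exact: le_trans q].
Qed.
End expb.

Section core.
Context {R : realType} (N : nat).
Notation ffx := {ffun 'I_N * 'I_N -> bool}.

Lemma sum_family (h : 'I_N * 'I_N -> bool -> R) :
  \sum_(x : ffx | outcome_ok x) \prod_(p : 'I_N * 'I_N | (p.1 < p.2)%N) h p (x p)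
  = \prod_(p : 'I_N * 'I_N | (p.1 < p.2)%N) (h p true + h p false).
Proof.
under [RHS]eq_bigr do rewrite -big_bool.
rewrite (big_distr_big_dep false) /=.
apply: eq_bigl => x; rewrite /outcome_ok.
apply/forallP/familyP => /= H p; have := H p;
  have -> : (p \in (fun i : 'I_N * 'I_N => (i.1 < i.2)%N)) = (p.1 < p.2)%N by [].
  by case: (p.1 < p.2)%N => //=; rewrite !inE; case: (x p).
by case: (p.1 < p.2)%N => //=; rewrite !inE; case: (x p).
Qed.

Lemma pair_prod (i : 'I_N) (G : 'I_N -> R) :
  \prod_(p : 'I_N * 'I_N | (p.1 < p.2)%N)
     (if p.1 == i then G p.2 else if p.2 == i then G p.1 else 1)
  = \prod_(j | j != i) G j.
Proof.
rewrite (bigID (fun p : 'I_N * 'I_N => (p.1 == i) || (p.2 == i))) /=.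
rewrite [X in _ * X]big1 ?mulr1; last first.
  by move=> p /andP[_]; rewrite negb_or => /andP[/negbTE -> /negbTE ->].
pose h (j : 'I_N) : 'I_N * 'I_N := if (i < j)%N then (i, j) else (j, i).
pose h' (p : 'I_N * 'I_N) : 'I_N := if p.1 == i then p.2 else p.1.
rewrite (reindex_onto h h'); last first.
  move=> [a b] /= /andP[ab /orP[/eqP ai|/eqP bi]]; rewrite /h /h' /=.
    by subst a; rewrite eqxx ab.
  subst b; have -> : (a == i) = false by apply/negbTE; rewrite neq_ltn ab.
  by rewrite ltnNge ltnW.
apply: eq_big => j; rewrite /h /h'.
  case: (ltngtP i j) => [ij|ji|/val_inj ->] /=.
  - by rewrite ij !eqxx /= neq_ltn ij orbT.
  - have jE : (j == i) = false by apply/eqP => E; move: ji; rewrite E ltnn.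
    by rewrite ji jE !eqxx.
  - by rewrite ltnn /= eqxx.
move=> _; case: (ltngtP i j) => [ij|ji|/val_inj ->] /=.
- by rewrite eqxx.
- have jE : (j == i) = false by apply/eqP => E; move: ji; rewrite E ltnn.
  by rewrite jE eqxx.
- by rewrite eqxx.
Qed.

Variables (v : 'I_N -> R) (vpos : forall i, 0 < v i).
Definition rr a b := v a / (v a + v b).

Lemma rr01 a b : 0 <= rr a b <= 1.
Proof.
have := vpos a; have := vpos b; rewrite /rr => hb ha.
apply/andP; split; first by rewrite divr_ge0 // ltW // addr_gt0.
by rewrite ler_pdivrMr ?addr_gt0 // mul1r lerDl ltW.
Qed.

Lemma rrC a b : 1 - rr a b = rr b a.
Proof.
have := vpos a; have := vpos b; rewrite /rr => hb ha.
have h : v a + v b != 0 by rewrite gt_eqF // addr_gt0.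
by rewrite [v b + _]addrC; field.
Qed.

Lemma rr_mono1 a a' b : v a <= v a' -> rr a b <= rr a' b.
Proof.
have := vpos a; have := vpos a'; have := vpos b; rewrite /rr => hb ha' ha h.
rewrite ler_pdivrMr ?addr_gt0 // mulrAC ler_pdivlMr ?addr_gt0 //; nra.
Qed.

Lemma rr_anti2 a b b' : v b <= v b' -> rr a b' <= rr a b.
Proof.
have := vpos a; have := vpos b; have := vpos b'; rewrite /rr => hb' hb ha h.
rewrite ler_pdivrMr ?addr_gt0 // mulrAC ler_pdivlMr ?addr_gt0 //; nra.
Qed.

Lemma weight_ge0 x : 0 <= outcome_weight v x.
Proof.
apply: prodr_ge0 => p _; have := rr01 p.1 p.2; rewrite /rr.
by case: (x p) => /andP[h1 h2] //; rewrite subr_ge0.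
Qed.

Lemma weight_sum : \sum_(x : ffx | outcome_ok x) outcome_weight v x = 1.
Proof.
rewrite /outcome_weight (sum_family (fun p (b : bool) =>
  if b then v p.1 / (v p.1 + v p.2) else 1 - v p.1 / (v p.1 + v p.2))).
by apply: big1 => p _ /=; rewrite addrC subrK.
Qed.

Lemma mgf i l : 0 <= l <= 1/4 ->
  \sum_(x : ffx | outcome_ok x) outcome_weight v x * expR (l * score x i)
  <= expR (\sum_(j | j != i) (l * rr i j + l ^+ 2 * (rr i j * (1 - rr i j)))).
Proof.
move=> hl.
pose hh (p : 'I_N * 'I_N) (b : bool) : R :=
  if p.1 == i then expR (l * b%:R) else if p.2 == i then expR (l * (~~ b)%:R) else 1.
pose q (p : 'I_N * 'I_N) (b : bool) : R :=
  if b then v p.1 / (v p.1 + v p.2) else 1 - v p.1 / (v p.1 + v p.2).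
have E x : outcome_weight v x * expR (l * score x i) =
    \prod_(p : 'I_N * 'I_N | (p.1 < p.2)%N) (q p (x p) * hh p (x p)).
  rewrite big_split /=; congr (_ * _).
  rewrite /score mulr_sumr expR_sum -(pair_prod i (fun j => expR (l * (Xval x i j)%:R))).
  apply: eq_bigr => -[a b] /= ab; rewrite /hh /=.
  have [ai|ai] := eqVneq a i.
    by subst a; rewrite /Xval ab.
  have [bi|bi] := eqVneq b i => //.
  by subst b; rewrite /Xval ltnNge (ltnW ab) /= ab.
rewrite (eq_bigr _ (fun x _ => E x)) (sum_family (fun p b => q p b * hh p b)).
rewrite expR_sum -(pair_prod i (fun j => expR (l * rr i j + l ^+ 2 * (rr i j * (1 - rr i j))))).
apply: ler_prod => -[a b] /= ab.
have hq : forall c, 0 <= q (a, b) c.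
  move=> c; have := rr01 a b; rewrite /q /rr /=.
  by case: c => /andP[h1 h2] //; rewrite subr_ge0.
have hh0 : forall c, 0 <= hh (a, b) c.
  by move=> c; rewrite /hh /=; case: ifP => _; [|case: ifP => _]; rewrite ?expR_ge0.
apply/andP; split.
  by apply: addr_ge0; apply: mulr_ge0; [exact: (hq true)|exact: (hh0 true)|exact: (hq false)|exact: (hh0 false)].
rewrite /hh /q /=.
have [ai|ai] := eqVneq a i.
  subst a; rewrite mulr1 mulr0 expR0 mulr1.
  exact: (bern (rr01 i b) hl).
have [bi|bi] := eqVneq b i; last by rewrite !mulr1 addrC subrK.
subst b; rewrite mulr1 mulr0 expR0 mulr1.
have e := rrC i a; rewrite /rr in e; rewrite -e.
rewrite (_ : 1 - (1 - v i / (v i + v a)) = v i / (v i + v a)); last by ring.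
rewrite addrC.
exact: (bern (rr01 i a) hl).
Qed.

Lemma gmono (lam r r' : R) : 0 <= lam <= 1/2 -> 0 <= r -> r <= r' -> r' <= 1 ->
  lam * r + lam ^+ 2 * (r * (1 - r)) <= lam * r' + lam ^+ 2 * (r' * (1 - r')).
Proof.
move=> /andP[l0 l1] r0 rr' r1.
have h1 : 0 <= (r' - r) * (lam * (1 - lam)) by apply: mulr_ge0; [lra|apply: mulr_ge0; lra].
have h2 : 0 <= (r' - r) * (lam ^+ 2 * (2 - r - r')) by apply: mulr_ge0; [lra|apply: mulr_ge0; [apply: sqr_ge0|lra]].
have e : lam * r' + lam ^+ 2 * (r' * (1 - r')) - (lam * r + lam ^+ 2 * (r * (1 - r)))
  = (r' - r) * (lam * (1 - lam)) + (r' - r) * (lam ^+ 2 * (2 - r - r')) by ring.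
by rewrite -subr_ge0 e addr_ge0.
Qed.

Definition ff (lam : R) a j := lam * rr a j + lam ^+ 2 * (rr a j * (1 - rr a j)).

Lemma exponent_bound (m l i : 'I_N) (lam : R) : 0 <= lam <= 1/2 ->
  v i <= v m -> (forall j, v j <= v l) -> 
  \sum_(j | j != i) ff lam i j <= \sum_(j | j != l) ff lam m j.
Proof.
move=> hl vim vl.
apply: (@le_trans _ _ (\sum_(j | j != i) ff lam m j)).
  apply: ler_sum => j _; rewrite /ff; apply: gmono => //.
  - by case/andP: (rr01 i j).
  - exact: rr_mono1.
  - by case/andP: (rr01 m j).
have Hi : \sum_j ff lam m j = ff lam m i + \sum_(j | j != i) ff lam m j by rewrite (bigD1 i).
have Hl : \sum_j ff lam m j = ff lam m l + \sum_(j | j != l) ff lam m j by rewrite (bigD1 l).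
have : ff lam m l <= ff lam m i.
  rewrite /ff; apply: gmono => //.
  - by case/andP: (rr01 m l).
  - exact: rr_anti2.
  - by case/andP: (rr01 m i).
lra.
Qed.

Lemma Zmax_bound x (l t : R) : 0 < l -> (1 < N)%N ->
  Zmax x <= t + (\sum_(i : 'I_N | (i < N.-1)%N) expR (l * (score x i - t)) - 1) / l.
Proof.
move=> l0 N1.
set S := \sum_(i : 'I_N | (i < N.-1)%N) expR (l * (score x i - t)).
have term : forall i : 'I_N, (i < N.-1)%N -> expR (l * (score x i - t)) <= S.
  move=> i hi; rewrite /S (bigD1 i) //= lerDl; apply: sumr_ge0 => *; exact: expR_ge0.
have sc0 : forall i : 'I_N, 0 <= score (R:=R) x i.
  by move=> i0; rewrite /score; apply: sumr_ge0 => j _; exact: ler0n.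
have hS : expR (l * (Zmax x - t)) <= S.
  rewrite /Zmax; apply: (big_ind (fun z => expR (l * (z - t)) <= S)).
  - have i0 : (0 < N)%N by apply: ltn_trans N1.
    apply: (le_trans _ (term (Ordinal i0) _)); last by rewrite /=; case: N N1 => [|[|n]].
    by rewrite ler_expR ler_pM2l // lerD2r sc0.
  - move=> a b ha hb; rewrite maxEle; by case: ifP.
  - exact: term.
have := expR_ge1Dx (l * (Zmax x - t)).
move=> h; rewrite -lerBlDl ler_pdivlMr //; nra.
Qed.

Theorem core_bound (m l : 'I_N) (lam sig : R) :
  (1 < N)%N -> (forall i j : 'I_N, (i <= j)%N -> v i <= v j) ->
  (m : nat) = N.-2 -> (l : nat) = N.-1 -> 0 < lam <= 1/4 ->
  \sum_(j : 'I_N | (j < N.-1)%N) (rr m j * (1 - rr m j)) <= 2 * sig ->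
  cond_exp_Z v <= \sum_(j : 'I_N | (j < N.-1)%N) rr m j + ln N%:R / lam + 2 * lam * sig.
Proof.
move=> N1 vs hm hl /andP[lam0 lam1] hvar.
set M := \sum_(j : 'I_N | (j < N.-1)%N) rr m j.
set t := M + ln N%:R / lam + 2 * lam * sig.
have jl : forall j : 'I_N, (j != l) = (j < N.-1)%N.
  move=> j; rewrite -(inj_eq val_inj) /= hl; have := ltn_ord j.
  case: ltngtP => // h1 h2; lia.
have Ei : forall i : 'I_N, (i < N.-1)%N ->
    \sum_(x : ffx | outcome_ok x) outcome_weight v x * expR (lam * score x i)
    <= expR (lam * (M + 2 * lam * sig)).
  move=> i hi; apply: le_trans (mgf i _) _; first by apply/andP; split; lra.
  rewrite ler_expR.
  have := @exponent_bound m l i lam ltac:(apply/andP; split; lra)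
    (vs i m ltac:(move: hm hi; clear; lia)) (fun j => vs j l ltac:(move: hl (ltn_ord j); clear; lia)).
  rewrite /ff; move/le_trans; apply.
  rewrite (eq_bigl _ _ jl).
  have -> : \sum_(j : 'I_N | (j < N.-1)%N) (lam * rr m j + lam ^+ 2 * (rr m j * (1 - rr m j)))
     = lam * M + lam ^+ 2 * \sum_(j : 'I_N | (j < N.-1)%N) (rr m j * (1 - rr m j)).
    by rewrite big_split /= /M !mulr_sumr.
  have -> : lam * (M + 2 * lam * sig) = lam * M + lam ^+ 2 * (2 * sig) by ring.
  by rewrite lerD2l ler_wpM2l // sqr_ge0.
have N0 : (0 < N)%N by apply: ltn_trans N1.
have NR : 0 < N%:R :> R by rewrite ltr0n.
rewrite /cond_exp_Z.
apply: (@le_trans _ _ (\sum_(x : ffx | outcome_ok x) outcome_weight v x *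
   ((t - lam^-1) + lam^-1 * \sum_(i : 'I_N | (i < N.-1)%N) expR (lam * (score x i - t))))).
  apply: ler_sum => x _; apply: ler_wpM2l; first exact: weight_ge0.
  apply: le_trans (Zmax_bound x t lam0 N1) _; rewrite le_eqVlt; apply/orP; left; apply/eqP; ring.
have -> : \sum_(x : ffx | outcome_ok x) outcome_weight v x *
   ((t - lam^-1) + lam^-1 * \sum_(i : 'I_N | (i < N.-1)%N) expR (lam * (score x i - t)))
  = (t - lam^-1) * \sum_(x : ffx | outcome_ok x) outcome_weight v x
    + lam^-1 * \sum_(i : 'I_N | (i < N.-1)%N) \sum_(x : ffx | outcome_ok x)
        (expR (- (lam * t)) * (outcome_weight v x * expR (lam * score x i))).
  transitivity (\sum_(x : ffx | outcome_ok x) ((t - lam^-1) * outcome_weight v x +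
     lam^-1 * \sum_(i : 'I_N | (i < N.-1)%N)
        (expR (- (lam * t)) * (outcome_weight v x * expR (lam * score x i))))).
    apply: eq_bigr => x _; rewrite mulrDr; congr (_ + _); first by rewrite mulrC.
    rewrite mulrCA; congr (_ * _); rewrite mulr_sumr; apply: eq_bigr => i _.
    rewrite mulrDr mulrN expRD; ring.
  rewrite big_split /=; congr (_ + _); first by rewrite mulr_sumr.
  by rewrite -mulr_sumr exchange_big.
rewrite weight_sum mulr1.
set X := \sum_(i < N | (i < N.-1)%N) _.
have H1 : X <= 1.
  apply: (@le_trans _ _ (\sum_(i < N | (i < N.-1)%N) N%:R^-1)).
    apply: ler_sum => i hi; rewrite -mulr_sumr.
    apply: le_trans (ler_wpM2l (expR_ge0 _) (Ei i hi)) _.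
    rewrite -expRD.
    have -> : - (lam * t) + lam * (M + 2 * lam * sig) = - ln N%:R.
      rewrite /t; field; exact: lt0r_neq0.
    by rewrite expRN lnK // posrE.
  apply: (@le_trans _ _ (\sum_(i < N) N%:R^-1)).
    rewrite [X in X <= _]big_mkcond /=; apply: ler_sum => i _.
    by case: ifP => _ //; rewrite invr_ge0 ltW.
  by rewrite sumr_const card_ord -(mulr_natr (N%:R^-1) N) mulVf // lt0r_neq0.
have li : 0 < lam^-1 by rewrite invr_gt0.
have := ler_wpM2l (ltW li) H1; rewrite mulr1; lra.
Qed.

End core.

Section det.
Context {R : realType}.

Lemma ordstat_sorted N (u : nat -> R) i j : (i <= j)%N -> (j < N)%N ->
  ordstat N u i <= ordstat N u j.
Proof.
move=> ij jN; rewrite /ordstat.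
have so : sorted <=%R (sort <=%R [seq u i | i <- iota 0 N]) by apply: sort_sorted; exact: le_total.
apply: (sorted_leq_nth le_trans le_refl) => //; rewrite inE size_sort size_map size_iota //.
exact: leq_ltn_trans jN.
Qed.

Lemma ordstat_pos N (u : nat -> R) k : (forall i, (i < N)%N -> 0 < u i) -> (k < N)%N ->
  0 < ordstat N u k.
Proof.
move=> hu kN; rewrite /ordstat.
have : nth 0 (sort <=%R [seq u i | i <- iota 0 N]) k \in [seq u i | i <- iota 0 N].
  by rewrite -(mem_sort <=%R) mem_nth // size_sort size_map size_iota.
by case/mapP => i; rewrite mem_iota add0n => /andP[_ iN] ->; apply: hu.
Qed.

Lemma sum_reindex N (F : nat -> R) : (0 < N)%N ->
  \sum_(1 <= i < N) F i = \sum_(j : 'I_N | (j < N.-1)%N) F j.+1.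
Proof.
move=> N0; rewrite big_add1 big_mkord (big_ord_widen _ (fun j => F j.+1) (_ : N.-1 <= N)%N) //.
exact: leq_pred.
Qed.


Lemma det N (u : nat -> R) (EU e : R) :
  (1 < N)%N -> (forall i, (i < N)%N -> 0 < u i) -> 0 < EU -> e <= 1 ->
  8 * ln N%:R <= EU * Num.sqrt N%:R ->
  let V k := ordstat N u k.-1 in
  V N / Num.sqrt N%:R <= e ->
  N%:R^-1 * \sum_(1 <= i < N) (V i * V N.-1 / (V N.-1 + V i)) <= 2 * EU ->
  cond_exp_Z (fun i : 'I_N => V i.+1) <=
    \sum_(1 <= i < N) (V N.-1 / (V N.-1 + V i))
    + Num.sqrt (8 * EU * (N%:R * ln N%:R / V N.-1)).
Proof.
move=> N1 hu EU0 e1 hL V hB hC.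
have N0 : (0 < N)%N by apply: ltn_trans N1.
pose v := fun i : 'I_N => V i.+1.
have vpos : forall i, 0 < v i by move=> i; exact: (ordstat_pos hu (ltn_ord i)).
have vs : forall i j : 'I_N, (i <= j)%N -> v i <= v j.
  by move=> i j ij; exact: (ordstat_sorted u ij (ltn_ord j)).
have hmN : (N.-2 < N)%N by move: N1; clear; lia.
have hlN : (N.-1 < N)%N by move: N1; clear; lia.
pose m := Ordinal hmN; pose l := Ordinal hlN.
have vm : V N.-1 = v m by rewrite /v /V /=; congr ordstat; move: N1; clear; lia.
have vl : V N = v l by rewrite /v /V /=; congr ordstat; move: N1; clear; lia.
rewrite (sum_reindex (fun i => V N.-1 / (V N.-1 + V i)) N0) /=.
rewrite (sum_reindex (fun i => V i * V N.-1 / (V N.-1 + V i)) N0) /= in hC.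
rewrite vm in hC *.
set a := v m in hC *.
have a0 : 0 < a by apply: vpos.
have NR : 0 < N%:R :> R by rewrite ltr0n.
have sqN : 0 < Num.sqrt N%:R :> R by rewrite sqrtr_gt0.
have sqN2 : Num.sqrt N%:R ^+ 2 = N%:R :> R by rewrite sqr_sqrtr // ltW.
have aN : a <= Num.sqrt N%:R.
  have : v l <= Num.sqrt N%:R.
    move: hB; rewrite vl ler_pdivrMr // => hB; nra.
  by apply: le_trans; apply: vs => /=; move: N1; clear; lia.
set L := ln N%:R.
have L0 : 0 < L by rewrite /L ln_gt0 // ltr1n.
set sig := EU * N%:R / a.
have sig0 : 0 < sig by rewrite /sig divr_gt0 // mulr_gt0.
have sigge : EU * Num.sqrt N%:R <= sig.
  rewrite /sig ler_pdivlMr // -[X in _ <= EU * X]sqN2 expr2 mulrA.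
  exact: (ler_wpM2l (ltW (mulr_gt0 EU0 sqN)) aN).
set lam := Num.sqrt (L / (2 * sig)).
have lam2 : lam ^+ 2 = L / (2 * sig) by rewrite sqr_sqrtr // ltW // divr_gt0 // mulr_gt0.
have lam0 : 0 < lam by rewrite sqrtr_gt0 divr_gt0 // mulr_gt0.
have lam14 : lam <= 1/4.
  have h : lam ^+ 2 * (2 * sig) = L by rewrite lam2 divfK // gt_eqF // mulr_gt0.
  set z := lam ^+ 2 in h.
  have hL' : 8 * L <= EU * Num.sqrt N%:R := hL.
  have h1 : (z - 1/16) * sig <= 0 by clearbody z lam sig L; lra.
  have h2 : z <= 1/16.
    by rewrite -subr_le0; move: h1; rewrite pmulr_lle0.
  have : lam * lam <= 1/16 by rewrite -expr2.
  nra.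
have hvar : \sum_(j : 'I_N | (j < N.-1)%N) (rr v m j * (1 - rr v m j)) <= 2 * sig.
  apply: (@le_trans _ _ ((\sum_(j : 'I_N | (j < N.-1)%N) (v j * a / (a + v j))) / a)).
    rewrite mulr_suml; apply: ler_sum => j _.
    have := vpos j; rewrite /rr -/a => vj.
    have -> : v j * a / (a + v j) / a = v j / (a + v j) by field; rewrite ?gt_eqF ?addr_gt0.
    have -> : 1 - a / (a + v j) = v j / (a + v j) by field; rewrite ?gt_eqF ?addr_gt0.
    rewrite ler_piMl ?divr_ge0 ?ltW ?addr_gt0 //.
    by rewrite ltr_pdivrMr ?addr_gt0 // mul1r ltrDl.
  have hS : \sum_(j : 'I_N | (j < N.-1)%N) (v j * a / (a + v j)) <= 2 * EU * N%:R.
    by move: hC; rewrite mulrC ler_pdivrMr.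
  have -> : 2 * sig = (2 * EU * N%:R) / a by rewrite /sig !mulrA.
  by rewrite ler_pM2r // invr_gt0.
have := core_bound vpos N1 vs (erefl (m : nat)) (erefl (l : nat)) (ltac:(apply/andP; split; lra) : 0 < lam <= 1/4) hvar.
move/le_trans; apply.
rewrite -addrA; apply: lerD; first exact: lexx.
have lam2' : lam ^+ 2 = ln N%:R / (2 * sig) := lam2.
have L0' : 0 < ln N%:R :> R := L0.
have E : 8 * EU * (N%:R * L / a) = (ln N%:R / lam + 2 * lam * sig) ^+ 2.
  have -> : 8 * EU * (N%:R * L / a) = 8 * sig * ln N%:R by rewrite /sig /L; ring.
  rewrite (_ : (ln N%:R / lam + 2 * lam * sig) ^+ 2 =
     (ln N%:R) ^+ 2 / lam ^+ 2 + 4 * ln N%:R * sig + 4 * lam ^+ 2 * sig ^+ 2).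
    rewrite lam2'; field.
    by apply/andP; split; apply: lt0r_neq0.
  by field; apply: lt0r_neq0.
rewrite E sqrtr_sqr ger0_norm //.
by apply: addr_ge0; [apply: divr_ge0; apply: ltW | apply: mulr_ge0; [apply: mulr_ge0|]; apply: ltW].
Qed.
End det.

Section asym.
Context {R : realType}.

Lemma ln_small (c : R) : 0 < c ->
  \forall N \near \oo, 8 * ln (N%:R : R) <= c * Num.sqrt N%:R.
Proof.
move=> c0.
apply: filterS2 (nbhs_infty_ger ((32 / c) ^+ 4)) (nbhs_infty_ge 1%N) => N hN N1.
have NR : 0 < N%:R :> R by rewrite ltr0n.
set y := Num.sqrt (Num.sqrt (N%:R : R)).
have sq0 : 0 < Num.sqrt (N%:R : R) by rewrite sqrtr_gt0.
have y0 : 0 < y by rewrite sqrtr_gt0.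
have y2 : y ^+ 2 = Num.sqrt N%:R by rewrite sqr_sqrtr // ltW.
have y4 : y ^+ 4 = N%:R by rewrite (_ : 4 = 2 * 2)%N // exprM y2 sqr_sqrtr // ltW.
have ly : ln y < y by apply: ln_sublinear.
have lN : ln (N%:R : R) = ln y *+ 4 by rewrite -y4 lnXn.
have yc : 32 / c <= y.
  set a := 32 / c in hN *.
  have a0 : 0 < a by rewrite divr_gt0.
  rewrite leNgt; apply/negP => hy.
  have h2 : y ^+ 2 < a ^+ 2 by rewrite !expr2; nra.
  have h4 : y ^+ 2 * y ^+ 2 < a ^+ 2 * a ^+ 2.
    have := sqr_ge0 y; rewrite -expr2 => z0; nra.
  move: h4; rewrite -!exprD /= y4 => h4.
  have : a ^+ 4 <= N%:R := hN.
  lra.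
have hyc : 32 <= c * y by rewrite -ler_pdivrMl //; rewrite mulrC.
rewrite lN -y2 -mulr_natr.
have : 32 * y <= c * y * y by rewrite ler_pM2r.
rewrite expr2; nra.
Qed.
End asym.

Lemma EN_pos {R : realType} N (u : nat -> R) : (1 < N)%N -> (forall i, (i < N)%N -> 0 < u i) ->
  let V k := ordstat N u k.-1 in
  0 < N%:R^-1 * \sum_(1 <= i < N) (V i * V N.-1 / (V N.-1 + V i)).
Proof.
move=> N1 hu; pose V k := ordstat N u k.-1.
change (0 < N%:R^-1 * \sum_(1 <= i < N) (V i * V N.-1 / (V N.-1 + V i))).
have N0 : (0 < N)%N by apply: ltn_trans N1.
rewrite (sum_reindex (fun i => V i * V N.-1 / (V N.-1 + V i)) N0) /=.
have hp : forall k, (k < N)%N -> 0 < ordstat N u k by move=> k; exact: ordstat_pos.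
have vN : 0 < V N.-1 by apply: hp; move: N1; clear; lia.
apply: mulr_gt0; first by rewrite invr_gt0 ltr0n.
rewrite (bigD1 (Ordinal N0)) /=; last by move: N1; clear; lia.
set S := \sum_(i < N | _) _.
have h2 : 0 <= S.
  apply: sumr_ge0 => j _.
  have vj : 0 < V j.+1 by exact: (hp _ (ltn_ord j)).
  by apply: ltW; apply: divr_gt0; [apply: mulr_gt0|apply: addr_gt0].
have v1 : 0 < V 1 by apply: hp.
have h1 : 0 < V 1 * V N.-1 / (V N.-1 + V 1) by apply: divr_gt0; [apply: mulr_gt0|apply: addr_gt0].
move: h1 h2; clearbody S; rewrite /=; lra.
Qed.

Unset Implicit Arguments. Set Strict Implicit.

Theorem lemma5 (d : measure_display) (T : measurableType d) (R : realType)
  (P : probability T R) (U : nat -> {RV P >-> R})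
  (beta x0 : R) (eta : R -> R) :
  mutually_independent P (fun n => U n) ->
  identically_distributed P (fun n => U n) ->
  (forall n, {ae P, forall w, 0 < U n w}) ->
  ('E_P[fun w => (U 0%N w ^+ 2)%R] < +oo)%E ->
  0 < beta < 1 / 2 ->
  0 < x0 -> in_interior_support P (U 0%N) x0 ->
  convex_on_halfline (fun x => tail P (U 0%N) x `^ (1 / 2 - beta)) x0 ->
  (forall x y, 0 <= x -> x <= y -> eta y <= eta x) ->
  eta x @[x --> +oo] --> 0 ->
  let V N (w : T) (k : nat) := ordstat N (fun i => U i w) k.-1 in
  (* B_N = { V_N / sqrt N <= eta N } *)
  let B N := [set w | V N w N / Num.sqrt N%:R <= eta N%:R] in
  let EU := fine 'E_P[U 0%N] in
  (* E_N(V) = 1/N sum_{i=1}^{N-1} V_i V_{N-1} / (V_{N-1} + V_i) *)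
  let EN N w := N%:R^-1 * \sum_(1 <= i < N)
       (V N w i * V N w N.-1 / (V N w N.-1 + V N w i)) in
  let C N := [set w | EU / 4 <= EN N w <= 2 * EU] in
  (P (B N)) @[N --> \oo] --> 1%E ->
  \forall N \near \oo, {ae P, forall w, B N w -> C N w ->
     cond_exp_Z (fun i : 'I_N => V N w i.+1) <=
       \sum_(1 <= i < N) (V N w N.-1 / (V N w N.-1 + V N w i))
       + Num.sqrt (8 * EU * (N%:R * ln N%:R / V N w N.-1))}.
Proof.
move=> Hind Hid Hpos HU2 hbeta hx0 hint hconv hmono heta V B EU EN C HB.
have Hae : forall n, {ae P, forall w, forall i, (i < n)%N -> 0 < U i w}.
  elim=> [|n IH]; first by apply: nearW => w i; rewrite ltn0.
  apply: filterS2 IH (Hpos n) => w h1 h2 i; rewrite ltnS leq_eqVlt => /orP[/eqP -> //|].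
  exact: h1.
have [EU0|EU0] := leP EU 0.
  move: (nbhs_infty_gt 1%N); apply: filterS => N N1.
  move: (Hae N); apply: filterS => w hw _ /andP[_ hC].
  have hE : 0 < EN N w := EN_pos N1 hw.
  exfalso; move: hC hE; rewrite /EN; lra.
have HL := ln_small EU0.
have Heta : \forall N \near \oo, eta N%:R <= 1.
  have := cvgr_lt 0 heta 1 ltr01; case => M [Mr HM].
  move: (nbhs_infty_ger (M + 1)); apply: filterS => N hN.
  by apply/ltW/HM; lra.
apply: filterS3 HL Heta (nbhs_infty_gt 1%N) => N hL he N1.
move: (Hae N); apply: filterS => w hw hBw /andP[_ hC].
exact: (det N1 hw EU0 he hL hBw hC).
Qed.
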